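(* Let $X$ and $Y$ be nonnegative random variables with distribution functions $F_X,F_Y\in\mathcal{F}$, let $s\geq1$ be an integer and $\alpha_1,\alpha_2>0$. If $X\leq_{s\text{-IFR}}Y$, then $\alpha_1X\leq_{s\text{-IFR}}\alpha_2Y$.
   Context: $\mathcal{F}$ denotes the family of distribution functions $F$ with $F(0)=0$ whose probability distribution has support contained in $[0,\infty)$. For a nonnegative random variable $X$ with density $f_X$: $\overline{T}_{X,0}=f_X$, $\widetilde{\mu}_{X,0}=1$, and for $s\geq1$, $x\geq0$, $\overline{T}_{X,s}(x)=\frac{1}{\widetilde{\mu}_{X,s-1}}\int_x^\infty \overline{T}_{X,s-1}(t)\,dt$ with $\widetilde{\mu}_{X,s}=\int_0^\infty \overline{T}_{X,s}(t)\,dt$, and $\overline{T}_{X,s}(x)=1$ for $x<0$. We write $X\leq_{s\text{-IFR}}Y$ (''$X$ is more $s$-IFR than $Y$'') if $c_s(x)=\overline{T}_{Y,s}^{-1}(\overline{T}_{X,s}(x))$ is convex. *)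

(* Defs.v *)
From HB Require Import structures.
From mathcomp Require Import all_boot all_order all_algebra.
From mathcomp Require Import all_classical all_reals all_analysis.
Set Implicit Arguments. Unset Strict Implicit. Unset Printing Implicit Defensive.
Import Order.TTheory GRing.Theory Num.Theory.
Import numFieldNormedType.Exports.
Local Open Scope classical_set_scope.
Local Open Scope ring_scope.

Section Defs.
Context {R : realType}.
Local Notation mu := (@lebesgue_measure R).

Definition is_density d (T : measurableType d) (P : probability T R)
  (X : T -> R) (f : R -> R) : Prop :=
  [/\ measurable_fun setT X, measurable_fun setT f, (forall x, 0 <= f x) &
      forall A : set R, measurable A ->
        P (X @^-1` A) = (\int[mu]_(x in A) (f x)%:E)%E].

Fixpoint Tbar (f : R -> R) (s : nat) : R -> R :=
  match s with
  | 0 => f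
  | s'.+1 => fun x => if x < 0 then 1
             else Rintegral mu `[x, +oo[ (Tbar f s') /
                  (if s' is 0 then 1 else Rintegral mu `[0, +oo[ (Tbar f s'))
  end.

Definition mutilde (f : R -> R) (s : nat) : R :=
  if s is 0 then 1 else Rintegral mu `[0, +oo[ (Tbar f s).

(* the iterated tails up to order s are well defined: the normalizing
   integrals mutilde f k, k < s, are finite *)
Definition tails_defined (f : R -> R) (s : nat) : Prop :=
  forall k, (k < s)%N -> mu.-integrable `[0, +oo[ (fun x => (Tbar f k x)%:E).

Definition Tinv (T : R -> R) (u : R) : R := inf [set x | 0 <= x /\ T x <= u].

Definition convex_on (D : set R) (c : R -> R) : Prop :=
  forall x y t, D x -> D y -> 0 <= t <= 1 ->
    c (t * x + (1 - t) * y) <= t * c x + (1 - t) * c y.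

(* X <=_{s-IFR} Y : c_s(x) = Tbar_{Y,s}^{-1}(Tbar_{X,s}(x)) is convex
   (on the support {x >= 0 | Tbar_{X,s}(x) > 0} where it is defined) *)
Definition le_sIFR d (T : measurableType d) (P : probability T R)
  (s : nat) (X Y : T -> R) : Prop :=
  forall fX fY, is_density P X fX -> is_density P Y fY ->
    convex_on [set x | 0 <= x /\ 0 < Tbar fX s x]
              (fun x => Tinv (Tbar fY s) (Tbar fX s x)).

End Defs.

(* Main.v *)
Require Import Defs.
From HB Require Import structures.
From mathcomp Require Import all_boot all_order all_algebra.
From mathcomp Require Import all_classical all_reals all_analysis.
From mathcomp Require Import measurable_realfun.
Import Order.TTheory GRing.Theory Num.Theory.
Import numFieldNormedType.Exports.
Local Open Scope classical_set_scope.
Local Open Scope ring_scope.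

Section S.
Context {R : realType}.
Local Notation mu := (@lebesgue_measure R).

Lemma meas_scale (a : R) : measurable_fun [set: R] (fun t : R => t / a).
Proof. exact: measurable_funM. Qed.

Lemma push_scale (a : R) (a0 : 0 < a) (A : set R) : measurable A ->
  pushforward mu (fun t : R => t / a) A = (a%:E * mu A)%E.
Proof.
move=> mA.
have ai : 0 <= a^-1 by rewrite invr_ge0 ltW.
have mphi : measurable_fun [set: measurableTypeR R] ((fun t => t / a) : measurableTypeR R -> measurableTypeR R) := meas_scale a.
have := @lebesgue_measure_unique R (mscale (NngNum ai) (pushforward mu ((fun t => t / a) : measurableTypeR R -> measurableTypeR R))).
move=> ->//=.
  rewrite /mscale/= muleA -EFinM divff ?gt_eqF// mul1e//.
move=> _ [[b c] _ <-] /=.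
rewrite /mscale /pushforward /=.
set S := (X in (_ * mu X)%E).
have -> : S = `]a * b, a * c]%classic.
  rewrite /S.
  apply/seteqP; split => t /=; rewrite !in_itv /=.
    by rewrite ler_pdivrMr // ltr_pdivlMr // ![_ * a]mulrC.
  by rewrite ler_pdivrMr // ltr_pdivlMr // ![_ * a]mulrC.
rewrite !lebesgue_measure_itv /= !lte_fin ltr_pM2l //.
case: ifP => _; last by rewrite mule0.
by rewrite -EFinB -EFinM -mulrBr mulrA mulVf ?gt_eqF // mul1r.
Qed.

Lemma int_scale (a : R) (a0 : 0 < a) (z : R) (h : R -> R) :
  measurable_fun `[z / a, +oo[ h -> (forall t, 0 <= h t) ->
  (\int[mu]_(t in [set` `[z, +oo[%R]) (h (t / a))%:E =
   a%:E * \int[mu]_(t in [set` `[z / a, +oo[%R]) (h t)%:E)%E.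
Proof.
move=> mh h0.
have mphi : measurable_fun [set: measurableTypeR R] ((fun t => t / a) : measurableTypeR R -> measurableTypeR R) := meas_scale a.
have ai : 0 <= a by rewrite ltW.
have -> : `[z, +oo[%classic = (fun t : R => t / a) @^-1` `[z / a, +oo[.
  apply/seteqP; split => t /=; rewrite !in_itv /= !andbT.
    by rewrite ler_pM2r ?invr_gt0.
  by rewrite ler_pM2r ?invr_gt0.
transitivity (\int[mu]_(t in (fun t : R => (t / a)%R) @^-1` [set` `[z / a, +oo[%R]) ((fun u => (h u)%:E) \o (fun u => (u / a)%R)) t)%E; first by [].
rewrite -(ge0_integral_pushforward mphi) //; last first.
- by move=> t _; rewrite lee_fin.
- exact/measurable_EFinP.
transitivity (\int[mscale (NngNum ai) mu]_(t in [set` `[z / a, +oo[%R]) (h t)%:E)%E.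
  apply: eq_measure_integral => //= A mA AS.
  by rewrite /mscale /=; apply: push_scale.
rewrite ge0_integral_mscale //.
- exact/measurable_EFinP.
- by move=> t _; rewrite lee_fin.
Qed.

Lemma fine_scale (a : R) (e : \bar R) : 0 < a -> fine (a%:E * e)%E = a * fine e.
Proof.
move=> a0; case: e => [r| |] //=.
- by rewrite gt0_muley ?lte_fin // mulr0.
- by rewrite gt0_muleNy ?lte_fin // mulr0.
Qed.

Lemma inf_scale (a : R) (a0 : 0 < a) (S : set R) : (forall x, S x -> 0 <= x) ->
  inf [set x | S (x / a)] = a * inf S.
Proof.
move=> S0.
have [[x0 Sx0]|Sn] := pselect (S !=set0); last first.
  have E : S = set0 by apply/seteqP; split => // x Sx; apply: Sn; exists x.
  rewrite E.
  have -> : [set x | @set0 R (x / a)] = set0 by apply/seteqP; split.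
  by rewrite inf0 mulr0.
set S' := [set x | S (x / a)].
have hS : has_lbound S by exists 0 => y /S0.
have hS' : has_lbound S'.
  exists 0 => y /S0; rewrite pmulr_lge0 // invr_gt0 //.
have S'ax : S' (a * x0) by rewrite /S' /= mulrAC divff ?gt_eqF // mul1r.
apply/le_anti/andP; split.
  rewrite -ler_pdivrMl //.
  apply: lb_le_inf; first by exists x0.
  move=> x Sx; rewrite ler_pdivrMl //.
  apply: (ge_inf hS'); rewrite /S' /= mulrAC divff ?gt_eqF // mul1r //.
apply: lb_le_inf; first by exists (a * x0).
move=> y S'y; rewrite -ler_pdivlMl //.
by rewrite mulrC; apply: (ge_inf hS).
Qed.

Lemma Tbar_ge0 (f : R -> R) k : (forall x, 0 <= f x) -> forall x, 0 <= Tbar f k x.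
Proof.
move=> f0; elim: k => [|k IH] x //=.
case: ifP => _ //.
apply: divr_ge0; first by apply: Rintegral_ge0 => t _; exact: IH.
case: k IH => [|k] IH //.
by apply: Rintegral_ge0 => t _; exact: IH.
Qed.


Lemma Rint_scale (a : R) (a0 : 0 < a) (z : R) (h : R -> R) :
  0 <= z -> measurable_fun `[(0:R), +oo[ h -> (forall t, 0 <= h t) ->
  Rintegral mu `[z, +oo[ (fun t => h (t / a)) = a * Rintegral mu `[z / a, +oo[ h.
Proof.
move=> z0 mh h0; rewrite /Rintegral int_scale // ?fine_scale //.
apply: measurable_funS mh => //.
move=> t /=; rewrite !in_itv /= !andbT; apply: le_trans.
by rewrite divr_ge0 // ltW.
Qed.

Lemma TbarS (f : R -> R) k x : Tbar f k.+2 x = if x < 0 then 1 else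
  Rintegral mu `[x, +oo[ (Tbar f k.+1) / Rintegral mu `[(0:R), +oo[ (Tbar f k.+1).
Proof. by []. Qed.

Lemma Tbar_scale d (T : measurableType d) (P : probability T R) (X : T -> R)
  (f g : R -> R) (a : R) (s : nat) : 0 < a ->
  is_density P X f -> is_density P (fun w => a * X w) g -> tails_defined f s ->
  forall k, (1 <= k <= s)%N -> forall x, Tbar g k x = Tbar f k (x / a).
Proof.
move=> a0 [mX mf f0 df] [_ mg g0 dg] tf.
have ltxa x : (x / a < 0) = (x < 0) by rewrite pmulr_llt0 // invr_gt0.
elim => [//|k IH] /andP[k1 ks] x.
case: k IH k1 ks => [|k] IH _ ks.
  rewrite /= ltxa; case: ifP => // _.
  rewrite !divr1 /Rintegral -dg -?df //; congr (fine (P _)).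
  apply/seteqP; split => w /=; rewrite !in_itv /= !andbT.
    by rewrite ler_pdivrMr // mulrC.
  by rewrite ler_pdivrMr // mulrC.
have IH' : Tbar g k.+1 = fun t => Tbar f k.+1 (t / a).
  by apply/funext => t; apply: IH; apply/andP; split => //; exact: ltnW.
have mk : measurable_fun `[(0:R), +oo[ (Tbar f k.+1).
  by have /measurable_EFinP := measurable_int mu (tf k.+1 ks).
have gk := @Tbar_ge0 f k.+1 f0.
rewrite !TbarS ltxa IH'; case: (ltrP x 0) => x0; first by [].
rewrite (@Rint_scale a a0 x _ x0 mk gk) (@Rint_scale a a0 0 _ (lexx 0) mk gk).
by rewrite mul0r invfM mulrACA divff ?gt_eqF // mul1r.
Qed.


Lemma Tinv_scale (a : R) (a0 : 0 < a) (h : R -> R) u :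
  Tinv (fun t => h (t / a)) u = a * Tinv h u.
Proof.
rewrite /Tinv -inf_scale //; last by move=> x [].
congr inf; apply/seteqP; split => x /= [x0 hx]; split => //.
- by rewrite divr_ge0 // ltW.
- by move: x0; rewrite pmulr_lge0 // invr_gt0.
Qed.

End S.

Theorem corollary1 (R : realType) (d : measure_display) (T : measurableType d)
  (P : probability T R) (X Y : T -> R) (fX fY : R -> R) (s : nat)
  (a1 a2 : R) :
  (forall w, 0 <= X w) -> (forall w, 0 <= Y w) ->
  P (X @^-1` `]-oo, 0]) = 0%E -> P (Y @^-1` `]-oo, 0]) = 0%E ->
  is_density P X fX -> is_density P Y fY ->
  tails_defined fX s -> tails_defined fY s ->
  (1 <= s)%N -> 0 < a1 -> 0 < a2 ->
  le_sIFR P s X Y ->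
  le_sIFR P s (fun w => a1 * X w) (fun w => a2 * Y w).
Proof.
move=> _ _ _ _ dX dY tX tY s1 a1p a2p H gX gY dgX dgY.
have cf := H fX fY dX dY.
have EX := Tbar_scale _ _ _ _ _ _ _ _ a1p dX dgX tX.
have EY := Tbar_scale _ _ _ _ _ _ _ _ a2p dY dgY tY.
have ss : (1 <= s <= s)%N by rewrite s1 leqnn.
have -> : Tbar gX s = fun x => Tbar fX s (x / a1) by apply/funext => x; exact: EX.
have -> : Tbar gY s = fun x => Tbar fY s (x / a2) by apply/funext => x; exact: EY.
move=> x y t [x0 Dx] [y0 Dy] t01.
rewrite !Tinv_scale //.
have xa : 0 <= x / a1 by rewrite divr_ge0 // ltW.
have ya : 0 <= y / a1 by rewrite divr_ge0 // ltW.
have := cf (x / a1) (y / a1) t (conj xa Dx) (conj ya Dy) t01.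
rewrite /= (_ : (t * x + (1 - t) * y) / a1 = t * (x / a1) + (1 - t) * (y / a1)); last first.
  by rewrite mulrDl !mulrA.
move=> le; rewrite (mulrCA t a2) (mulrCA (1 - t) a2) -mulrDr ler_pM2l //.
Qed.
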